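(* Let $d$ be a nonnegative integer and let $H$ be a multigraph of even order with $\phi(H) \le d+1$, and let $r$ be the number of vertices of degree $d+1$ in $H$. Let $S \subsetneq V(H)$ with $|S|$ odd, $|S|\ge 3$, such that $\langle S\rangle$ is $(d+1)$-full in $H$, i.e. $t(\langle S\rangle)=d+1$. Then $\Delta(H_S)\le d+1$, $\Gamma(H_S)\le d+1$, and $H_S$ has at most $r$ vertices of degree $d+1$. Also $\Delta(H_{S^c})\le d+1$ and $\Gamma(H_{S^c})\le d+1$, and if $H_{S^c}$ has more than $r$ vertices of degree $d+1$, then it has exactly $r+1$ vertices, each of degree $d+1$. Here $S^c=V(H)\setminus S$.
   Context: Multigraphs are finite and loopless, multiple edges allowed. For $S \subseteq V(H)$, $\langle S\rangle$ is the induced subgraph. For a multigraph $K$ of odd order $n(K)\ge 3$ with $e(K)$ edges, $t(K) = 2e(K)/(n(K)-1)$. $\Gamma(H) = \max\{t(\langle R\rangle) : R\subseteq V(H), |R| \text{ odd}, |R|\ge 3\}$ (statements about $\Gamma$ of a multigraph with no such $R$ are vacuous); $\phi(H) = \lceil \max\{\Delta(H),\Gamma(H)\}\rceil$. Shrinking: for a nonempty proper subset $S$ of $V(H)$, $H_S$ has vertex set $(V(H)\setminus S)\cup\{s\}$ for a new vertex $s$; its edges are the edges of $H - S$ together with, for each $u \notin S$, exactly as many edges $us$ as there are edges of $H$ joining $u$ to vertices of $S$. *)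

(* Defs.v *)
From HB Require Import structures.
From mathcomp Require Import all_boot all_order all_algebra.
Set Implicit Arguments. Unset Strict Implicit. Unset Printing Implicit Defensive.
Import Order.TTheory GRing.Theory Num.Theory.

(* A multigraph H is represented by a vertex set V : {set T} in a finite type T
   together with an edge-multiplicity function m : T -> T -> nat
   (m x y = number of edges joining x and y).  Only values on V matter.
   Multigraph axioms (symmetry, looplessness) are hypotheses of the theorem. *)

Section Multigraph.
Variable T : finType.
Implicit Types (V R S : {set T}) (m : T -> T -> nat).

Definition is_multigraph m : Prop :=
  (forall x y, m x y = m y x) /\ (forall x, m x x = 0%N).

Definition deg V m x : nat := \sum_(y in V) m x y.

Definition Delta V m : nat := \max_(x in V) deg V m x.

Definition nedges m R : nat := (\sum_(x in R) \sum_(y in R) m x y)./2.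

Definition tK m R : rat := ((2 * nedges m R)%:R / (#|R| - 1)%:R)%R.

(* Gamma(H) = max t(<R>) over R subset V, |R| odd, |R| >= 3
   (0 if there is no such R; statements about Gamma are then vacuous). *)
Definition Gamma V m : rat :=
  (\big[Num.max/0]_(R : {set T} | (R \subset V) && odd #|R| && (3 <= #|R|)%N)
     tK m R)%R.

Definition phi V m : int := Num.ceil (Num.max ((Delta V m)%:R)%R (Gamma V m)).

Definition nverts_deg V m k : nat := #|[set x in V | deg V m x == k]|.

(* Shrinking S to a new vertex s := None; old vertex u is Some u. *)
Definition shrinkV V S : {set option T} := None |: (Some @: (V :\: S)).

Definition shrinkm m S (a b : option T) : nat :=
  match a, b with
  | Some u, Some v => m u v
  | Some u, None => \sum_(w in S) m u w
  | None, Some v => \sum_(w in S) m v w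
  | None, None => 0%N
  end.

End Multigraph.

(* Main.v *)
Require Import Defs.
From HB Require Import structures.
From mathcomp Require Import all_boot all_order all_algebra.
From mathcomp Require Import zify.
Import Order.TTheory GRing.Theory Num.Theory.
Set Implicit Arguments. Unset Strict Implicit. Unset Printing Implicit Defensive.

Definition W (T : finType) (m : T -> T -> nat) (A B : {set T}) : nat :=
  \sum_(x in A) \sum_(y in B) m x y.

Lemma W_Ul (T : finType) m (A1 A2 B : {set T}) : [disjoint A1 & A2] ->
  W m (A1 :|: A2) B = W m A1 B + W m A2 B.
Proof.
move=> dis; rewrite /W.
rewrite (eq_bigl [predU A1 & A2]); last by move=> x; rewrite !inE.
by rewrite bigU.
Qed.

Lemma W_sym (T : finType) m (A B : {set T}) : (forall x y, m x y = m y x) ->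
  W m A B = W m B A.
Proof.
move=> sy; rewrite /W exchange_big; apply: eq_bigr => x _; apply: eq_bigr => y _.
exact: sy.
Qed.

Lemma W_Ur (T : finType) m (A B1 B2 : {set T}) : [disjoint B1 & B2] ->
  W m A (B1 :|: B2) = W m A B1 + W m A B2.
Proof.
move=> dis; rewrite /W -big_split; apply: eq_bigr => x _ /=.
rewrite (eq_bigl [predU B1 & B2]); last by move=> y; rewrite !inE.
by rewrite bigU.
Qed.

Lemma W_even (T : finType) m (R : {set T}) : is_multigraph m ->
  exists k, W m R R = 2 * k.
Proof.
move=> [sy lo].
move: {2}#|R| (erefl #|R|) => n; elim: n R => [|n IH] R HR.
  exists 0; move/cards0_eq: HR => ->; by rewrite /W big_set0.
have /set0Pn [x xR] : R != set0 by apply/negP => /eqP E; rewrite E cards0 in HR.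
have HR' : #|R :\ x| = n by move: HR; rewrite (cardsD1 x) xR; case.
have [k Hk] := IH _ HR'.
have dis : [disjoint [set x] & R :\ x].
  by rewrite -setI_eq0; apply/eqP/setP => y; rewrite !inE; case: eqP => // ->; rewrite eqxx.
rewrite -(setD1K xR) W_Ul // !W_Ur // Hk (W_sym _ (R :\ x)) //.
have -> : W m [set x] [set x] = 0 by rewrite /W !big_set1 lo.
exists (W m (R :\ x) [set x] + k); lia.
Qed.

Lemma sum_opt (T : finType) (R : {set option T}) (F : option T -> nat) :
  \sum_(a in R) F a =
  (if None \in R then F None else 0) + \sum_(x in [set x | Some x \in R]) F (Some x).
Proof.
rewrite (big_setID [set None]).
have -> : R :\: [set None] = Some @: [set x | Some x \in R].
  apply/setP => [[x|]]; rewrite !inE.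
    by rewrite (mem_imset _ _ (@Some_inj _)) inE.
  rewrite eqxx /=; apply/esym/negbTE/negP; by case/imsetP.
rewrite big_imset /=; last by move=> x y _ _ [].
congr (_ + _); case: ifP => NR.
  have -> : R :&: [set None] = [set None].
    by apply/setP => a; rewrite !inE; case: eqP => [->|]; rewrite ?NR ?andbT ?andbF //.
  by rewrite big_set1.
have -> : R :&: [set None] = set0.
  by apply/setP => a; rewrite !inE; case: eqP => [->|]; rewrite ?NR ?andbT ?andbF //.
by rewrite big_set0.
Qed.

Lemma card_opt (T : finType) (R : {set option T}) :
  #|R| = (None \in R) + #|[set x | Some x \in R]|.
Proof. by rewrite -!sum1_card sum_opt; case: (None \in R). Qed.

Lemma shrinkV_Some (T : finType) (V X : {set T}) x :
  (Some x \in shrinkV V X) = (x \in V :\: X).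
Proof. rewrite /shrinkV in_setU1 /= (mem_imset _ _ (@Some_inj _)). done. Qed.

Lemma shrinkV_None (T : finType) (V X : {set T}) : None \in shrinkV V X.
Proof. by rewrite /shrinkV !inE. Qed.

Lemma shrinkV_A (T : finType) (V X : {set T}) :
  [set x | Some x \in shrinkV V X] = V :\: X.
Proof. by apply/setP => x; rewrite inE shrinkV_Some. Qed.

Lemma deg_None (T : finType) (V X : {set T}) m :
  deg (shrinkV V X) (shrinkm m X) None = W m (V :\: X) X.
Proof. by rewrite /deg sum_opt shrinkV_None shrinkV_A. Qed.

Lemma deg_Some (T : finType) (V X : {set T}) m u : X \subset V ->
  deg (shrinkV V X) (shrinkm m X) (Some u) = deg V m u.
Proof.
move=> sub; rewrite /deg sum_opt shrinkV_None shrinkV_A /=.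
by rewrite [RHS](big_setID X) (setIidPr sub).
Qed.

Lemma W_shrink (T : finType) (X : {set T}) m (R : {set option T}) :
  W (shrinkm m X) R R =
  (if None \in R then 2 * W m [set x | Some x \in R] X else 0)
  + W m [set x | Some x \in R] [set x | Some x \in R].
Proof.
set A := [set x | Some x \in R].
have E1 : forall x, \sum_(b in R) shrinkm m X (Some x) b =
   (if None \in R then \sum_(w in X) m x w else 0) + \sum_(y in A) m x y.
  by move=> x; rewrite sum_opt.
have E0 : \sum_(b in R) shrinkm m X None b = W m A X.
  by rewrite sum_opt /W; case: ifP.
rewrite /W sum_opt E0 (eq_bigr _ (fun x _ => E1 x)) big_split /=.
case: ifP => _; last by rewrite big1 // add0n.
rewrite /W -/A; lia.
Qed.

Lemma tK_le (T : finType) m (R : {set T}) (c : nat) : (3 <= #|R|)%N ->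
  (W m R R <= c * (#|R| - 1))%N -> (tK m R <= c%:R)%R.
Proof.
move=> H3 HW; rewrite /tK ler_pdivrMr ?ltr0n; last by lia.
rewrite -natrM ler_nat /nedges.
have := odd_double_half (W m R R); rewrite /W => E.
rewrite /W in HW; lia.
Qed.

Lemma tK_ge (T : finType) m (R : {set T}) (c : nat) : is_multigraph m ->
  (3 <= #|R|)%N -> (tK m R <= c%:R)%R -> (W m R R <= c * (#|R| - 1))%N.
Proof.
move=> mg H3; rewrite /tK ler_pdivrMr ?ltr0n; last by lia.
rewrite -natrM ler_nat /nedges.
have [k Hk] := W_even R mg; rewrite /W in Hk; rewrite Hk.
have E2 : (2 * k)./2 = k by rewrite mul2n doubleK.
by rewrite E2 /W Hk.
Qed.

Lemma tK_eq (T : finType) m (R : {set T}) (c : nat) : is_multigraph m ->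
  (3 <= #|R|)%N -> tK m R = (c%:R)%R -> W m R R = c * (#|R| - 1).
Proof.
move=> mg H3 E.
have [k Hk] := W_even R mg.
have E2 : (2 * k)./2 = k by rewrite mul2n doubleK.
move: E; rewrite /tK /nedges -/(W m R R) Hk E2 => E.
have : ((2 * k)%:R = (c * (#|R| - 1))%:R :> rat)%R.
  rewrite [RHS]natrM -E mulfVK //; rewrite pnatr_eq0; lia.
by move/eqP; rewrite eqr_nat => /eqP.
Qed.

Lemma Gamma_ge (T : finType) (V R : {set T}) m : R \subset V -> odd #|R| ->
  (3 <= #|R|)%N -> (tK m R <= Gamma V m)%R.
Proof.
move=> sRV oR R3; rewrite /Gamma (bigD1 R) /=; last by rewrite sRV oR R3.
by rewrite le_max lexx.
Qed.

Lemma Gamma_le (T : finType) (V : {set T}) m (c : nat) :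
  (forall R : {set T}, R \subset V -> odd #|R| -> (3 <= #|R|)%N ->
     (W m R R <= c * (#|R| - 1))%N) -> (Gamma V m <= c%:R)%R.
Proof.
move=> H; rewrite /Gamma; apply: (big_ind (fun x => x <= c%:R)%R) => //.
- by move=> x y hx hy; rewrite ge_max hx hy.
move=> R /andP[/andP[sRV oR] R3]; apply: tK_le => //; exact: H.
Qed.

Lemma sum_full (T : finType) (A : {set T}) (f : T -> nat) c :
  (forall x, x \in A -> f x <= c) -> \sum_(x in A) f x = c * #|A| ->
  forall x, x \in A -> f x = c.
Proof.
move=> hle hs x xA; apply/eqP; rewrite eqn_leq hle //=.
rewrite (big_setD1 x xA) /= in hs.
have h2 : \sum_(y in A :\ x) f y <= \sum_(y in A :\ x) c.
  by apply: leq_sum => y; rewrite inE => /andP[_]; exact: hle.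
rewrite sum_nat_const in h2.
have := cardsD1 x A; rewrite xA => hc.
rewrite hc mulnDr muln1 in hs; lia.
Qed.

Lemma disjD (T : finType) (A V : {set T}) : [disjoint A & V :\: A].
Proof.
rewrite -setI_eq0; apply/eqP/setP => y; rewrite !inE.
by case: (y \in A); rewrite ?andbF.
Qed.

Lemma splitV (T : finType) (A V : {set T}) : A \subset V -> V = A :|: (V :\: A).
Proof. by move=> sAV; rewrite -{1}(setID V A) (setIidPr sAV). Qed.

Lemma degsum (T : finType) (V A : {set T}) m :
  \sum_(x in A) deg V m x = W m A V.
Proof. by []. Qed.

Lemma ar_split (c a s : nat) : 0 < s -> c * (a + s - 1) = c * a + c * (s - 1).
Proof. by move=> s1; rewrite -mulnDr addnBA. Qed.

Lemma ar1 (x y waa was wss : nat) :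
  waa + was + (was + wss) <= x + y -> wss = y -> 2 * was + waa <= x.
Proof. lia. Qed.

Lemma ar2 (x y waa wab wbb wasc wss : nat) :
  wss = waa + 2 * wab + wbb -> wss = x + y -> wbb <= y ->
  waa + wab + wasc <= x -> 2 * wasc + waa <= x.
Proof. lia. Qed.

Lemma ar_R (b : bool) (r a : nat) : r = b + a -> b = true -> r - 1 = a.
Proof. by move=> -> ->; rewrite add1n subn1. Qed.

Lemma ar3 (a b c : nat) : a + b + (b + c) = a + 2 * b + c.
Proof. lia. Qed.

Lemma ar4 (s r : nat) : s <= r -> r < 1 + s -> 1 + s = r.+1.
Proof. lia. Qed.
Theorem mainTheorem7 (T : finType) (V : {set T}) (m : T -> T -> nat) (d : nat)
  (S : {set T}) :
  is_multigraph m ->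
  ~~ odd #|V| ->
  (phi V m <= (d.+1)%:Z)%R ->
  S \proper V -> odd #|S| -> (3 <= #|S|)%N ->
  tK m S = ((d.+1)%:R)%R ->
  let r := nverts_deg V m d.+1 in
  let Sc := V :\: S in
  [/\ (Delta (shrinkV V S) (shrinkm m S) <= d.+1)%N,
      (Gamma (shrinkV V S) (shrinkm m S) <= ((d.+1)%:R)%R)%R &
      (nverts_deg (shrinkV V S) (shrinkm m S) d.+1 <= r)%N] /\
  [/\ (Delta (shrinkV V Sc) (shrinkm m Sc) <= d.+1)%N,
      (Gamma (shrinkV V Sc) (shrinkm m Sc) <= ((d.+1)%:R)%R)%R &
      ((r < nverts_deg (shrinkV V Sc) (shrinkm m Sc) d.+1)%N ->
        #|shrinkV V Sc| = r.+1 /\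
        forall x, x \in shrinkV V Sc -> deg (shrinkV V Sc) (shrinkm m Sc) x = d.+1)].
Proof.
move=> mg hVe hphi pSV oS S3 htS r Sc.
have sSV : S \subset V by exact: proper_sub.
have [sy lo] := mg.
move: hphi; rewrite /phi ceil_le_int ge_max => /andP[hD hG].
have hD' : (Delta V m <= d.+1)%N by rewrite -(ler_nat rat).
have hdeg : forall x, x \in V -> (deg V m x <= d.+1)%N.
  move=> x xV; exact: leq_trans (@leq_bigmax_cond _ (fun x => x \in V) (deg V m) x xV) hD'.
have hW : forall R : {set T}, R \subset V -> odd #|R| ->
    (W m R R <= d.+1 * (#|R| - 1))%N.
  move=> R sRV oR; case: (ltnP 2 #|R|) => R3.
    apply: tK_ge => //; apply: le_trans hG; exact: Gamma_ge.
  have : #|R| == 1%N by move: oR R3; case: #|R| => [|[|[|]]].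
  by case/cards1P => x ->; rewrite /W !big_set1 lo.
have hS : W m S S = d.+1 * (#|S| - 1) by exact: tK_eq.
have dSSc := disjD S V.
have hSV := splitV sSV.
have hsumS : W m S S + W m S Sc <= d.+1 * #|S|.
  rewrite -W_Ur // -hSV -degsum.
  rewrite mulnC -sum_nat_const; apply: leq_sum => x xS; apply: hdeg.
  exact: (subsetP sSV).
have hc : d.+1 * #|S| = d.+1 * (#|S| - 1) + d.+1.
  have hk : #|S| = (#|S| - 1).+1 by lia.
  by rewrite {1}hk mulnS addnC.
have hbnd : W m S Sc <= d.+1 by lia.
have hWSV : W m S V = W m S S + W m S Sc by rewrite {1}hSV W_Ur.
have hfull : W m S Sc = d.+1 -> forall x, x \in S -> deg V m x = d.+1.
  move=> E; apply: sum_full.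
    by move=> x xS; apply: hdeg; exact: (subsetP sSV).
  by rewrite degsum hWSV hS E -hc.
set P := [set x in V | deg V m x == d.+1].
have hr : r = #|P| by [].
have hSP : W m S Sc = d.+1 -> S \subset P.
  move=> E; apply/subsetP => x xS; rewrite inE (subsetP sSV _ xS) /=.
  by rewrite hfull.
have hYS : V :\: Sc = S.
  apply/setP => x; rewrite !inE; case xS: (x \in S) => /=.
    by rewrite (subsetP sSV _ xS).
  by case: (x \in V).
have sScV : Sc \subset V := subsetDl V S.
split; split.
- apply/bigmax_leqP => -[u|] hu /=.
    rewrite deg_Some //; apply: hdeg; move: hu; rewrite shrinkV_Some inE.
    by case/andP.
  by rewrite deg_None W_sym.
- apply: Gamma_le => R sR oR R3; rewrite W_shrink.
  set A := [set x | Some x \in R].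
  have sA : A \subset Sc.
    apply/subsetP => x; rewrite inE => hx.
    by have := subsetP sR _ hx; rewrite shrinkV_Some.
  have hcard := card_opt R; rewrite -/A in hcard.
  have sAV : A \subset V := subset_trans sA (subsetDl V S).
  case: ifP hcard => hN hcard.
    have dAS : [disjoint A & S] by rewrite disjoint_sym; exact: disjointWr sA dSSc.
    have hI : A :&: S = set0 by apply/eqP; rewrite setI_eq0.
    have hcU : #|A :|: S| = #|A| + #|S| by rewrite -cardsUI hI cards0 addn0.
    have oA : ~~ odd #|A| by move: oR; rewrite hcard oddD /=; case: (odd #|A|).
    have := hW (A :|: S); rewrite subUset sAV sSV hcU oddD (negbTE oA) oS.
    move=> /(_ isT isT).
    rewrite W_Ul // !W_Ur // (W_sym S A) // ar_split; last exact: ltnW (ltnW S3).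
    rewrite (ar_R hcard (erefl true)) => h; exact: ar1 h hS.
  rewrite add0n; have hRA : #|R| = #|A| by rewrite hcard.
  by rewrite hRA; apply: hW => //; rewrite -hRA.
- rewrite /nverts_deg card_opt.
  set Q := [set a in shrinkV V S | _].
  have hQA : [set x | Some x \in Q] = P :\: S.
    apply/setP => x; rewrite inE [in LHS]inE shrinkV_Some deg_Some //.
    by rewrite !inE andbA.
  rewrite hQA hr -(cardsID S P) leq_add2r.
  case hN : (None \in Q) => //.
  move: hN; rewrite inE deg_None shrinkV_None /= W_sym // => /eqP E.
  have := hSP E => sP.
  have : #|S| <= #|P :&: S| by apply: subset_leq_card; rewrite subsetI sP subxx.
  move=> h; exact: leq_trans (ltnW (ltnW S3)) h.
- apply/bigmax_leqP => -[u|] hu /=.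
    rewrite deg_Some //; apply: hdeg; move: hu; rewrite shrinkV_Some hYS.
    exact: (subsetP sSV).
  by rewrite deg_None hYS.
- apply: Gamma_le => R sR oR R3; rewrite W_shrink.
  set A := [set x | Some x \in R].
  have sA : A \subset S.
    apply/subsetP => x; rewrite inE => hx.
    by have := subsetP sR _ hx; rewrite shrinkV_Some hYS.
  have hcard := card_opt R; rewrite -/A in hcard.
  have sAV : A \subset V := subset_trans sA sSV.
  case: ifP hcard => hN hcard; last first.
    rewrite add0n; have hRA : #|R| = #|A| by rewrite hcard.
    by rewrite hRA; apply: hW => //; rewrite -hRA.
  set B := S :\: A.
  have hS' : S = A :|: B := splitV sA.
  have dAB : [disjoint A & B] := disjD A S.
  have hSAB : W m S S = W m A A + 2 * W m A B + W m B B.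
    by rewrite {1 2}hS' W_Ul // !W_Ur // (W_sym B A) // ar3.
  have hAV : W m A V = W m A A + W m A B + W m A Sc.
    by rewrite {1}hSV W_Ur // {1}hS' W_Ur.
  have hdA : W m A V <= d.+1 * #|A|.
    rewrite -degsum mulnC -sum_nat_const; apply: leq_sum => x xA; apply: hdeg.
    exact: (subsetP sAV).
  have hcS : #|A| + #|B| = #|S| by rewrite -(cardsID A S) (setIidPr sA).
  have oA : ~~ odd #|A| by move: oR; rewrite hcard oddD /=; case: (odd #|A|).
  have oB : odd #|B| by move: oS; rewrite -hcS oddD (negbTE oA).
  have hB := hW B (subset_trans (subsetDl S A) sSV) oB.
  have B1 : 0 < #|B| by move: oB; case: #|B|.
  rewrite (ar_R hcard (erefl true)).
  have hc2 : d.+1 * (#|S| - 1) = d.+1 * #|A| + d.+1 * (#|B| - 1).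
    by rewrite -hcS ar_split.
  rewrite hS in hSAB; rewrite hAV in hdA.
  exact: ar2 hSAB hc2 hB hdA.
- move=> hlt; rewrite /nverts_deg card_opt in hlt.
  move: hlt; set Q := [set a in shrinkV V Sc | _] => hlt.
  have hQA : [set x | Some x \in Q] = P :&: S.
    apply/setP => x; rewrite inE [in LHS]inE shrinkV_Some hYS deg_Some //.
    rewrite !inE; case xS: (x \in S); rewrite ?andbF ?andbT //.
    by rewrite (subsetP sSV _ xS).
  rewrite hQA in hlt.
  have hPS : #|P :&: S| <= r by rewrite hr; apply: subset_leq_card; exact: subsetIl.
  case hN : (None \in Q) hlt; first last.
    move=> hlt; have := leq_trans hlt hPS; by rewrite ltnn.
  move: hN; rewrite inE deg_None shrinkV_None hYS /= => /eqP E hlt.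
  have sP := hSP E.
  have hPS2 : P :&: S = S by apply/setIidPr.
  have hSr : #|S| <= r by rewrite hr; exact: subset_leq_card.
  rewrite hPS2 in hlt.
  split.
    by rewrite card_opt shrinkV_None shrinkV_A hYS; exact: ar4.
  move=> -[u|] hu.
    rewrite deg_Some //; apply: hfull; move: hu; by rewrite shrinkV_Some hYS.
  by rewrite deg_None hYS.
Qed.
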